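(* Let $M$ be a root of unity toric frame of $\mathcal F$, $k\in[1,N]$, and $g=(n_1,\dots,n_N)\in\mathbb Z^N$ such that $\Lambda_M(g,e_j)\equiv0\pmod\ell$ for all $j\neq k$ and $n_k=0$. Then for each sign $s\in\{+,-\}$ there is a unique ($\mathbb Q(\varepsilon^{1/2})$-algebra) automorphism $\rho$ of $\mathcal F$ such that $\rho(M(e_k))=M(e_k)+M(e_k+sg)$ and $\rho(M(e_j))=M(e_j)$ for $j\ne k$.
   Context: Let $\ell$ be a positive integer, $\mathbb Z_\ell=\mathbb Z/\ell\mathbb Z$, $\varepsilon^{1/2}\in\mathbb C$ a primitive $\ell$-th root of unity, $\mathcal A^{1/2}_\varepsilon=\mathbb Z[\varepsilon^{1/2}]$, $\varepsilon^{a/2}=(\varepsilon^{1/2})^a$ for $a\in\mathbb Z_\ell$; $e_1,\dots,e_N$ is the standard basis of $\mathbb Z^N$. For a skew-symmetric bilinear form $\Lambda:\mathbb Z^N\times\mathbb Z^N\to\mathbb Z_\ell$, $\mathcal T_\varepsilon(\Lambda)$ is the $\mathcal A^{1/2}_\varepsilon$-algebra with basis $\{X^f\}_{f\in\mathbb Z^N}$ and $X^fX^g=\varepsilon^{\Lambda(f,g)/2}X^{f+g}$. A root of unity toric frame of a division algebra $\mathcal F$ over $\mathbb Q(\varepsilon^{1/2})$ is a map $M:\mathbb Z^N\to\mathcal F$ such that for some (unique) skew-symmetric $\Lambda=:\Lambda_M$ there is an injective $\mathcal A^{1/2}_\varepsilon$-algebra map $\phi:\mathcal T_\varepsilon(\Lambda)\to\mathcal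 F$, $\phi(X^f)=M(f)$ for all $f$, with $\mathcal F$ the skew field of fractions of its image. *)

(* Defs.v *)
From HB Require Import structures.
From mathcomp Require Import all_boot all_order all_algebra.
Set Implicit Arguments. Unset Strict Implicit. Unset Printing Implicit Defensive.
Import Order.TTheory GRing.Theory Num.Theory.
Local Open Scope ring_scope.

(* Z^N is modelled as integer row vectors 'rV[int]_N; e_j = evec j. *)
Definition evec (N : nat) (j : 'I_N) : 'rV[int]_N := delta_mx 0 j.

(* A bilinear form Z^N x Z^N -> Z_ell, lifted to an integer matrix L:
   Lambda(f,g) = f L g^T (read modulo ell).  Skew-symmetry mod ell. *)
Definition bform (N : nat) (L : 'M[int]_N) (f g : 'rV[int]_N) : int :=
  (f *m L *m g^T) 0 0.
Definition skew_mod (ell N : nat) (L : 'M[int]_N) : Prop :=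
  forall i j, (ell%:Z %| L i j + L j i)%Z.

(* K is (a copy of) Q(eps^{1/2}): a characteristic-0 field generated over Q
   by z = eps^{1/2}, a primitive ell-th root of unity, ell > 0. *)
Definition is_Qzeta (K : fieldType) (ell : nat) (z : K) : Prop :=
  [/\ (0 < ell)%N, ell.-primitive_root z, [pchar K] =i pred0 &
      forall x : K, exists p : {poly rat}, x = (map_poly ratr p).[z]].

Definition division_ring (K : fieldType) (F : unitAlgType K) : Prop :=
  forall x : F, x != 0 -> x \is a GRing.unit.

Section Frames.
Variables (K : fieldType) (F : unitAlgType K) (ell N : nat) (z : K).

Definition Acoef (p : {poly int}) : K := (map_poly intr p).[z].

(* image of phi : T_eps(Lambda) -> F, phi(X^f) = M f, A-linear *)
Definition in_frame_image (M : 'rV[int]_N -> F) (x : F) : Prop :=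
  exists n (c : 'I_n -> {poly int}) (f : 'I_n -> 'rV[int]_N),
    x = \sum_(i < n) Acoef (c i) *: M (f i).

(* injectivity of phi: the M f (f in Z^N) are A-linearly independent *)
Definition frame_lin_indep (M : 'rV[int]_N -> F) : Prop :=
  forall n (c : 'I_n -> {poly int}) (f : 'I_n -> 'rV[int]_N),
    injective f -> \sum_(i < n) Acoef (c i) *: M (f i) = 0 ->
    forall i, Acoef (c i) = 0.

(* M is a root of unity toric frame with form Lambda = bform L:
   phi is an A-algebra map (M 0 = 1, M f M g = eps^{Lambda(f,g)/2} M(f+g)),
   injective, and F is the skew field of fractions of its image. *)
Definition toric_frame_with (M : 'rV[int]_N -> F) (L : 'M[int]_N) : Prop :=
  [/\ skew_mod ell L, M 0 = 1,
      (forall f g, M f * M g = z ^ (bform L f g) *: M (f + g)),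
      frame_lin_indep M &
      forall x : F, exists a b, [/\ in_frame_image M a, in_frame_image M b,
                                    b != 0 & x = a * b^-1]].

Definition alg_auto (rho : F -> F) : Prop :=
  [/\ {morph rho : x y / x + y}, {morph rho : x y / x * y}, rho 1 = 1,
      (forall (a : K) x, rho (a *: x) = a *: rho x) & bijective rho].

End Frames.

(* Main.v *)
Require Import Defs.
From HB Require Import structures.
From mathcomp Require Import all_boot all_order all_algebra.
From Stdlib Require Import ClassicalEpsilon.
From mathcomp Require Import ring.
Set Implicit Arguments. Unset Strict Implicit. Unset Printing Implicit Defensive.
Import Order.TTheory GRing.Theory Num.Theory.
Local Open Scope ring_scope.

Section Main.
Variables (K : fieldType) (F : unitAlgType K) (ell N : nat) (z : K).
Variables (M : 'rV[int]_N -> F) (L : 'M[int]_N) (k : 'I_N) (g : 'rV[int]_N).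
Hypothesis ell_gt0 : (0 < ell)%N.
Hypothesis zprim : ell.-primitive_root z.
Hypothesis Kchar : [pchar K] =i pred0.
Hypothesis Kgen : forall x : K, exists p : {poly rat}, x = (map_poly ratr p).[z].
Hypothesis Fdiv : division_ring F.
Hypothesis Lskew : skew_mod ell L.
Hypothesis M0 : M 0 = 1.
Hypothesis Mmul : forall f h, M f * M h = z ^ (bform L f h) *: M (f + h).
Hypothesis Mind : frame_lin_indep z M.
Hypothesis Mfrac : forall x : F, exists a b, [/\ in_frame_image z M a,
   in_frame_image z M b, b != 0 & x = a * b^-1].
Hypothesis hg : forall j : 'I_N, j != k -> (ell%:Z %| bform L g (evec j))%Z.
Hypothesis hgk : g 0 k = 0.

Lemma z_neq0 : z != 0.
Proof.
apply/negP=> /eqP z0; have := prim_expr_order zprim.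
by rewrite z0 expr0n; case: ell ell_gt0 => // n _ /= /eqP; rewrite eq_sym oner_eq0.
Qed.

Lemma zD a b : z ^ (a + b) = z ^ a * z ^ b.
Proof. by rewrite expfzDr // z_neq0. Qed.

Lemma zdvd a : (ell%:Z %| a)%Z -> z ^ a = 1.
Proof.
move=> /divzK <-; rewrite mulrC -exprz_exp.
have -> : z ^ (ell%:Z) = 1 by rewrite -exprnP (prim_expr_order zprim).
by rewrite exp1rz.
Qed.

Lemma zunit a : z ^ a \is a GRing.unit.
Proof. by rewrite unitfE expfz_neq0 // z_neq0. Qed.

Lemma intr_neq0 (D : int) : D != 0 -> (D%:~R : K) != 0.
Proof.
have h n : (n%:R : K) == 0 = (n == 0)%N by move: n; apply/pcharf0P.
case: D => n.
  move=> Hn; rewrite -pmulrn h; apply: contra Hn => /eqP ->; done.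
by move=> _; rewrite NegzE mulrNz -pmulrn oppr_eq0 h.
Qed.

Lemma bformE f h : bform L f h = \sum_(j < N) (f *m L) 0 j * h 0 j.
Proof. by rewrite /bform mxE; apply: eq_bigr => j _; rewrite [h^T _ _]mxE. Qed.

Lemma bform_e f j : bform L f (evec j) = (f *m L) 0 j.
Proof.
rewrite bformE /evec (bigD1 j) //= big1 ?addr0.
  by rewrite [delta_mx _ _ _ _]mxE !eqxx mulr1.
by move=> i /negbTE ij; rewrite [delta_mx _ _ _ _]mxE ij andbF mulr0.
Qed.

Definition deg (f : 'rV[int]_N) : int := f 0 k.

Lemma degD f h : deg (f + h) = deg f + deg h.
Proof. by rewrite /deg mxE. Qed.
Lemma degN f : deg (- f) = - deg f.
Proof. by rewrite /deg mxE. Qed.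
Lemma deg0 : deg 0 = 0.
Proof. by rewrite /deg mxE. Qed.
Lemma deg_e j : deg (evec j) = (j == k)%:R.
Proof. by rewrite /deg /evec mxE eqxx /= eq_sym. Qed.

Lemma bform_g0 h : deg h = 0 -> (ell%:Z %| bform L g h)%Z.
Proof.
move=> dh; rewrite bformE; apply: rpred_sum => j _.
case: (eqVneq j k) => [->|jk]; first by rewrite [h 0 k]dh mulr0 dvdz0.
by rewrite -bform_e; apply: dvdz_mulr; apply: hg.
Qed.

Lemma bform_skew f h : (ell%:Z %| bform L f h + bform L h f)%Z.
Proof.
rewrite !bformE.
have -> : \sum_(j < N) (h *m L) 0 j * f 0 j
   = \sum_(j < N) \sum_(i < N) f 0 j * h 0 i * L i j.
  apply: eq_bigr => j _; rewrite mxE big_distrl; apply: eq_bigr => i _ /=.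
  by rewrite mulrC mulrA [f 0 j * _]mulrC.
have -> : \sum_(j < N) (f *m L) 0 j * h 0 j
   = \sum_(j < N) \sum_(i < N) f 0 j * h 0 i * L j i.
  rewrite exchange_big; apply: eq_bigr => j _; rewrite mxE big_distrl.
  by apply: eq_bigr => i _ /=; rewrite mulrAC.
rewrite -big_split; apply: rpred_sum => j _; rewrite -big_split.
apply: rpred_sum => i _ /=; rewrite -mulrDr; apply: dvdz_mull.
exact: Lskew.
Qed.

Lemma bform_g0' h : deg h = 0 -> (ell%:Z %| bform L h g)%Z.
Proof.
move=> dh; have := bform_skew h g.
by rewrite rpredDr //; exact: bform_g0.
Qed.



Lemma Acoef1 : Acoef z 1 = 1.
Proof. by rewrite /Acoef rmorph1 hornerC. Qed.

Lemma M_neq0 f : M f != 0.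
Proof.
apply/negP=> /eqP Mf0.
have h := @Mind 1 (fun _ => 1) (fun _ => f).
have : Acoef z 1 = 0.
  apply: (h _ _ ord0); first by move=> i j _; rewrite !ord1.
  by rewrite big_ord1 Mf0 scaler0.
by rewrite Acoef1 => /eqP; rewrite oner_eq0.
Qed.

Lemma Munit f : M f \is a GRing.unit.
Proof. exact: Fdiv (M_neq0 f). Qed.

Lemma sAB (a b : K) (x y : F) : (a *: x) * (b *: y) = (a * b) *: (x * y).
Proof. by rewrite -scalerAl -scalerAr scalerA. Qed.

Lemma Mcomm f h : M f * M h = z ^ (bform L f h - bform L h f) *: (M h * M f).
Proof. by rewrite !Mmul [h + f]addrC scalerA -zD subrK. Qed.

Definition mon f (W : F) := exists c : K, W = c *: M f.

Lemma mon_M f : mon f (M f).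
Proof. by exists 1; rewrite scale1r. Qed.

Lemma mon_mul f h U W : mon f U -> mon h W -> mon (f + h) (U * W).
Proof.
move=> [c ->] [d ->]; exists (c * d * z ^ bform L f h).
by rewrite sAB Mmul scalerA.
Qed.

Lemma mon_scale f (a : K) U : mon f U -> mon f (a *: U).
Proof. by move=> [c ->]; exists (a * c); rewrite scalerA. Qed.

Lemma mon_comm f h U W : mon f U -> mon h W ->
  U * W = z ^ (bform L f h - bform L h f) *: (W * U).
Proof.
move=> [c ->] [d ->]; rewrite !sAB Mcomm !scalerA; congr (_ *: _).
by rewrite mulrC [d * c]mulrC.
Qed.

Lemma Minv f : (M f)^-1 = (z ^ bform L f (- f))^-1 *: M (- f).
Proof.
rewrite -[RHS]mul1r -(mulVr (Munit f)) -mulrA -scalerAr Mmul subrr M0.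
by rewrite scalerA mulVf ?scale1r ?mulr1 // -unitfE zunit.
Qed.

Lemma mon_inv f U : mon f U -> U \is a GRing.unit -> mon (- f) U^-1.
Proof.
move=> [c ->] Uu.
have c0 : c != 0 by apply: contraTneq Uu => ->; rewrite scale0r unitr0.
rewrite invrZ ?unitfE // ?Munit // Minv scalerA.
by exists (c^-1 * (z ^ bform L f (- f))^-1).
Qed.

Lemma mon_neq0 f U : mon f U -> U \is a GRing.unit -> U != 0.
Proof. by move=> _ Uu; apply: contraTneq Uu => ->; rewrite unitr0. Qed.

Lemma mon_exprz f U : mon f U -> U \is a GRing.unit -> forall n : int,
  exists f', deg f' = n * deg f /\ mon f' (U ^ n).
Proof.
move=> mU Uu.
have pos m : exists f', deg f' = m%:Z * deg f /\ mon f' (U ^ m%:Z).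
  elim: m => [|m [f' [df' mf']]].
    by exists 0; rewrite deg0 mul0r; split=> //; exists 1; rewrite M0 scale1r.
  exists (f' + f); rewrite degD df' exprSzr; split; last exact: mon_mul.
  by rewrite intS mulrDl mul1r addrC.
case=> m; first exact: pos.
have [f' [df' mf']] := pos m.+1.
exists (- f'); rewrite degN df' NegzE mulNr; split=> //.
rewrite -invr_expz; apply: mon_inv => //; exact: unitrXz.
Qed.

Definition sumphi (phi : 'rV[int]_N -> F) (s : seq (K * 'rV[int]_N)) : F :=
  \sum_(p <- s) p.1 *: phi p.2.

Definition inD (d : int) (x : F) :=
  exists s, x = sumphi M s /\ all (fun p => deg p.2 == d) s.
Definition inT (x : F) := exists s, x = sumphi M s.

Definition prods (s t : seq (K * 'rV[int]_N)) :=
  [seq (p.1 * q.1 * z ^ bform L p.2 q.2, p.2 + q.2) | p <- s, q <- t].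

Lemma sumphi_mul s t : sumphi M s * sumphi M t = sumphi M (prods s t).
Proof.
rewrite /sumphi big_distrl big_allpairs_dep /=; apply: eq_bigr => p _.
rewrite big_distrr; apply: eq_bigr => q _ /=.
by rewrite sAB Mmul scalerA.
Qed.

Lemma sumphi_cat phi s t : sumphi phi (s ++ t) = sumphi phi s + sumphi phi t.
Proof. by rewrite /sumphi big_cat. Qed.

Definition scales (a : K) (s : seq (K * 'rV[int]_N)) :=
  [seq (a * p.1, p.2) | p <- s].

Lemma sumphi_scale phi a s : sumphi phi (scales a s) = a *: sumphi phi s.
Proof.
rewrite /sumphi big_map scaler_sumr; apply: eq_bigr => p _ /=.
by rewrite scalerA.
Qed.

Lemma inD_T d x : inD d x -> inT x.
Proof. by move=> [s [-> _]]; exists s. Qed.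

Lemma mon_inD f W : mon f W -> inD (deg f) W.
Proof.
move=> [c ->]; exists [:: (c, f)]; rewrite /sumphi big_seq1 /=.
by rewrite eqxx.
Qed.

Lemma inD_mul d1 d2 x y : inD d1 x -> inD d2 y -> inD (d1 + d2) (x * y).
Proof.
move=> [s [-> hs]] [t [-> ht]]; exists (prods s t); split; first exact: sumphi_mul.
apply/allP => pq /allpairsP [[p q] [ps qt ->]] /=.
by rewrite degD (eqP (allP hs p ps)) (eqP (allP ht q qt)).
Qed.

Lemma inD_add d x y : inD d x -> inD d y -> inD d (x + y).
Proof.
move=> [s [-> hs]] [t [-> ht]]; exists (s ++ t).
by rewrite sumphi_cat all_cat hs ht.
Qed.

Lemma inT_mul x y : inT x -> inT y -> inT (x * y).
Proof. by move=> [s ->] [t ->]; exists (prods s t); rewrite sumphi_mul. Qed.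

Lemma inT_add x y : inT x -> inT y -> inT (x + y).
Proof. by move=> [s ->] [t ->]; exists (s ++ t); rewrite sumphi_cat. Qed.

Lemma inT_scale a x : inT x -> inT (a *: x).
Proof. by move=> [s ->]; exists (scales a s); rewrite sumphi_scale. Qed.

Lemma inT_M f : inT (M f).
Proof. by exists [:: (1, f)]; rewrite /sumphi big_seq1 scale1r. Qed.

Lemma inT_0 : inT 0.
Proof. by exists [::]; rewrite /sumphi big_nil. Qed.

Lemma inT_1 : inT 1.
Proof. by rewrite -M0; apply: inT_M. Qed.

Lemma inT_opp x : inT x -> inT (- x).
Proof. by move=> Tx; rewrite -scaleN1r; apply: inT_scale. Qed.


Lemma AcoefM p q : Acoef z (p * q) = Acoef z p * Acoef z q.
Proof. by rewrite /Acoef rmorphM hornerM. Qed.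

Lemma AcoefC c : Acoef z c%:P = c%:~R.
Proof. by rewrite /Acoef map_polyC hornerC. Qed.

Lemma ratdenom (rs : seq rat) : exists D : int, exists m : rat -> int,
  D != 0 /\ forall r, r \in rs -> D%:~R * (ratr r : K) = (m r)%:~R.
Proof.
elim: rs => [|r rs [D [m [D0 hm]]]]; first by exists 1, (fun _ => 0).
exists (D * denq r), (fun y => if y == r then D * numq r else denq r * m y); split.
  by rewrite mulf_neq0 ?denq_neq0.
move=> y; rewrite in_cons; case: eqP => [-> _|_ /= yrs].
  by rewrite /ratr !intrM -mulrA [_%:~R * (_ / _)]mulrC divfK ?intr_neq0 ?denq_neq0.
by rewrite !intrM [D%:~R * _]mulrC -mulrA hm.
Qed.

Lemma Kint x : exists a : int, exists q, a != 0 /\ a%:~R * x = Acoef z q.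
Proof.
have [p ->] := Kgen x.
have [D [m [D0 hm]]] := ratdenom p.
set q := \poly_(i < size p) (m p`_i).
exists D, q; split => //.
have sq : (size (map_poly (intr : int -> K) q) <= size p)%N.
  rewrite /map_poly; apply: leq_trans (size_poly _ _) _; exact: size_poly.
rewrite /Acoef (horner_coef_wide z sq) /map_poly (horner_coef_wide z (size_poly _ _)).
rewrite mulr_sumr; apply: eq_bigr => i _.
rewrite !coef_poly ltn_ord mulrA hm ?mem_nth //.
case: ifP => // /negbT; rewrite -leqNgt => hi.
have : q`_i = 0 by rewrite nth_default.
by rewrite coef_poly ltn_ord => ->; rewrite mulr0z.
Qed.

Lemma Kdenom (cs : seq K) : exists D : int, exists r : K -> {poly int},
  D != 0 /\ forall x, x \in cs -> D%:~R * x = Acoef z (r x).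
Proof.
elim: cs => [|x cs [D [r [D0 hr]]]].
  by exists 1, (fun _ => 0); split.
have [a [q [a0 hq]]] := Kint x.
exists (D * a), (fun y => if y == x then D%:P * q else a%:P * r y); split.
  by rewrite mulf_neq0.
move=> y; rewrite in_cons; case: eqP => [-> _|_ /= ycs].
  by rewrite AcoefM AcoefC intrM -mulrA hq.
by rewrite AcoefM AcoefC intrM -hr //; ring.
Qed.

Lemma indepK (hs : seq 'rV[int]_N) (c : 'rV[int]_N -> K) : uniq hs ->
  \sum_(h <- hs) c h *: M h = 0 -> forall h, h \in hs -> c h = 0.
Proof.
move=> Uh S0 h hh.
have [D [r [D0 hr]]] := Kdenom (map c hs).
have H := @Mind (size hs) (fun i => r (c (nth 0 hs i))) (fun i => nth 0 hs i).
have inj : injective (fun i : 'I_(size hs) => nth 0 hs i).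
  by move=> i j /eqP; rewrite nth_uniq // => /eqP; apply: val_inj.
have S1 : \sum_(i < size hs) Acoef z (r (c (nth 0 hs i))) *: M (nth 0 hs i) = 0.
  rewrite -(big_mkord xpredT (fun i => Acoef z (r (c (nth 0 hs i))) *: M (nth 0 hs i))).
  rewrite -(big_nth 0 xpredT (fun h => Acoef z (r (c h)) *: M h)).
  have -> : \sum_(h <- hs) Acoef z (r (c h)) *: M h =
            \sum_(h <- hs) D%:~R *: (c h *: M h).
    rewrite big_seq_cond [RHS]big_seq_cond; apply: eq_bigr => y /andP [yh _].
    by rewrite -hr ?map_f // scalerA.
  by rewrite -scaler_sumr S0 scaler0.
have hi : (index h hs < size hs)%N by rewrite index_mem.
have := H inj S1 (Ordinal hi); rewrite /= nth_index // -hr ?map_f //.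
by move/eqP; rewrite mulf_eq0 (negbTE (intr_neq0 D0)) => /eqP.
Qed.

Lemma regroup (I : eqType) (T : eqType) (s : seq I) (key : I -> T) (G : I -> F) :
  \sum_(p <- s) G p = \sum_(d <- undup (map key s)) \sum_(p <- s | key p == d) G p.
Proof.
rewrite [RHS](exchange_big_dep xpredT) //=; apply: eq_big_seq => p ps.
rewrite -big_filter.
have -> : [seq d <- undup (map key s) | key p == d] =
          [seq d <- undup (map key s) | pred1 (key p) d].
  by apply: eq_filter => d /=; rewrite eq_sym.
by rewrite filter_pred1_uniq ?undup_uniq ?mem_undup ?map_f // big_seq1.
Qed.

Lemma sumphi_group phi s : sumphi phi s =
  \sum_(h <- undup (map snd s)) (\sum_(p <- s | p.2 == h) p.1) *: phi h.
Proof.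
rewrite /sumphi (regroup s snd); apply: eq_bigr => h _; rewrite scaler_suml.
by apply: eq_bigr => p /eqP <-.
Qed.

Lemma wd phi s : sumphi M s = 0 -> sumphi phi s = 0.
Proof.
rewrite !sumphi_group => S0; rewrite big1_seq // => h /andP [_ hu].
have := indepK (undup_uniq _) S0 hu; rewrite /= => ->.
by rewrite scale0r.
Qed.

Definition rep (x : F) : seq (K * 'rV[int]_N) :=
  epsilon (inhabits [::]) (fun s => x = sumphi M s).
Definition lin phi x := sumphi phi (rep x).

Lemma rep_spec x : inT x -> x = sumphi M (rep x).
Proof. by move=> Tx; rewrite /rep; apply: (epsilon_spec (inhabits [::]) (fun s => x = sumphi M s)). Qed.

Lemma lin_val phi s : lin phi (sumphi M s) = sumphi phi s.
Proof.
have e := rep_spec (ex_intro _ s erefl : inT (sumphi M s)).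
have : sumphi M (rep (sumphi M s) ++ scales (-1) s) = 0.
  by rewrite sumphi_cat sumphi_scale -e scaleN1r subrr.
move/(wd phi); rewrite sumphi_cat sumphi_scale scaleN1r => /eqP.
by rewrite subr_eq0 => /eqP.
Qed.

Lemma lin_add phi x y : inT x -> inT y -> lin phi (x + y) = lin phi x + lin phi y.
Proof. by move=> [s ->] [t ->]; rewrite -sumphi_cat !lin_val sumphi_cat. Qed.

Lemma lin_scale phi a x : inT x -> lin phi (a *: x) = a *: lin phi x.
Proof. by move=> [s ->]; rewrite -sumphi_scale !lin_val sumphi_scale. Qed.

Lemma lin0 phi : lin phi 0 = 0.
Proof.
by have h := lin_val phi [::]; rewrite /sumphi !big_nil in h.
Qed.

Lemma inT_sum (I : eqType) (r : seq I) (G : I -> F) :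
  (forall i, i \in r -> inT (G i)) -> inT (\sum_(i <- r) G i).
Proof.
elim: r => [|i r IH] TG; first by rewrite big_nil; exact: inT_0.
rewrite big_cons; apply: inT_add; first by apply: TG; rewrite mem_head.
by apply: IH => j jr; apply: TG; rewrite in_cons jr orbT.
Qed.

Lemma lin_sum phi (I : eqType) (r : seq I) (G : I -> F) :
  (forall i, i \in r -> inT (G i)) ->
  lin phi (\sum_(i <- r) G i) = \sum_(i <- r) lin phi (G i).
Proof.
elim: r => [|i r IH] TG; first by rewrite !big_nil lin0.
have TG' : forall j, j \in r -> inT (G j).
  by move=> j jr; apply: TG; rewrite in_cons jr orbT.
rewrite !big_cons lin_add ?IH //; first by apply: TG; rewrite mem_head.
exact: inT_sum.
Qed.

Lemma lin_M phi f : lin phi (M f) = phi f.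
Proof.
have -> : M f = sumphi M [:: (1, f)] by rewrite /sumphi big_seq1 scale1r.
by rewrite lin_val /sumphi big_seq1 scale1r.
Qed.


Definition E := locked (M (evec k)).
Definition X := locked (M (evec k) + M (evec k + g)).
Definition Y := locked (E^-1 * X).
Definition G := locked (M g).
Definition comm (a b : F) := a * b = b * a.
Lemma EE : E = M (evec k). Proof. by rewrite /E -lock. Qed.
Lemma XE : X = M (evec k) + M (evec k + g). Proof. by rewrite /X -lock. Qed.
Lemma YE : Y = E^-1 * X. Proof. by rewrite /Y -lock. Qed.
Lemma GE : G = M g. Proof. by rewrite /G -lock. Qed.

Lemma degE : deg (evec k) = 1.
Proof. by rewrite deg_e eqxx. Qed.

Lemma Eunit : E \is a GRing.unit.
Proof. by rewrite EE; exact: Munit. Qed.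

Lemma mon_Einv : mon (- evec k) E^-1.
Proof. by apply: mon_inv; [rewrite EE; exact: mon_M | exact: Eunit]. Qed.

Lemma V_mon : mon g (E^-1 * M (evec k + g)).
Proof.
have := mon_mul mon_Einv (mon_M (evec k + g)).
by rewrite addKr.
Qed.

Lemma X_neq0 : X != 0.
Proof.
apply/negP => /eqP X0.
case: (eqVneq g 0) => [g0|gn0].
  have := @indepK [:: evec k] (fun _ => 2%:R) erefl.
  rewrite big_seq1 => h.
  have : (2%:R : K) = 0.
    apply: (h _ (evec k)); last by rewrite mem_head.
    by rewrite -X0 XE g0 addr0 scaler_nat mulr2n.
  by move/eqP; move/pcharf0P: Kchar => ->.
have := @indepK [:: evec k; evec k + g] (fun _ => 1).
rewrite /= inE andbT big_cons big_seq1 !scale1r -XE X0.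
have -> : (evec k != evec k + g) = true.
  by rewrite -{1}[evec k]addr0 (inj_eq (addrI _)) eq_sym gn0.
move=> /(_ erefl erefl (evec k)); rewrite mem_head => /(_ erefl) /eqP.
by rewrite oner_eq0.
Qed.

Lemma Xunit : X \is a GRing.unit.
Proof. exact: Fdiv X_neq0. Qed.

Lemma XEY : X = E * Y.
Proof. by rewrite YE mulVKr // Eunit. Qed.

Lemma Yunit : Y \is a GRing.unit.
Proof.
apply: Fdiv; apply: contraNneq X_neq0 => Y0.
by rewrite XEY Y0 mulr0.
Qed.

Lemma inD_eq d d' x : d = d' -> inD d x -> inD d' x.
Proof. by move=> ->. Qed.

Lemma Y_inD : inD 0 Y.
Proof.
have -> : Y = 1 + E^-1 * M (evec k + g).
  by rewrite YE XE mulrDr -EE mulVr // Eunit.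
apply: inD_add.
  by rewrite -M0 -deg0; apply: mon_inD; apply: mon_M.
by have := mon_inD V_mon; rewrite /deg hgk.
Qed.

Lemma comm_G_mon0 h W : mon h W -> deg h = 0 -> comm G W.
Proof.
move=> mW dh; rewrite /comm GE (mon_comm (mon_M g) mW) zdvd ?scale1r //.
by apply: rpredB; [apply: bform_g0 | apply: bform_g0'].
Qed.

Lemma comm_Y W : comm G W -> comm Y W.
Proof.
move=> cW; have [c Vc] := V_mon.
have -> : Y = 1 + c *: G by rewrite YE XE mulrDr -EE mulVr ?Eunit // Vc GE.
by rewrite /comm mulrDl mulrDr mul1r mulr1 -scalerAl -scalerAr cW.
Qed.

Lemma conj_comm f U W : mon f U -> U \is a GRing.unit -> comm G W ->
  comm G (U * W * U^-1).
Proof.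
move=> mU Uu cW.
have h := mon_comm (mon_M g) mU; rewrite -GE in h.
set c := z ^ _ in h.
have h' : U^-1 * G = c *: (G * U^-1).
  by rewrite -{1}(mulrK Uu G) h -scalerAl -scalerAr !mulrA mulVr // mul1r.
rewrite /comm !mulrA h -!scalerAl -!mulrA h' -!scalerAr; congr (_ *: _).
by rewrite !mulrA -(mulrA U G) cW !mulrA.
Qed.

Lemma conj_pow (U V : F) : U \is a GRing.unit -> V \is a GRing.unit ->
  (forall W, comm G W -> U * W * U^-1 = V * W * V^-1 /\ comm G (V * W * V^-1)) ->
  forall m W, comm G W -> U ^+ m * W * (U ^+ m)^-1 = V ^+ m * W * (V ^+ m)^-1
     /\ comm G (V ^+ m * W * (V ^+ m)^-1).
Proof.
move=> Uu Vu h; elim=> [|m IH] W cW.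
  by rewrite !expr0 invr1 mulr1 mul1r.
have [e1 c1] := IH W cW.
have [e2 c2] := h _ c1.
rewrite !exprS !invrM ?unitrX // !mulrA.
have -> : U * U ^+ m * W * (U ^+ m)^-1 * U^-1 =
          U * (U ^+ m * W * (U ^+ m)^-1) * U^-1 by rewrite !mulrA.
have -> : V * V ^+ m * W * (V ^+ m)^-1 * V^-1 =
          V * (V ^+ m * W * (V ^+ m)^-1) * V^-1 by rewrite !mulrA.
by rewrite e1 e2.
Qed.

Lemma conjXE W : comm G W -> X * W * X^-1 = E * W * E^-1 /\ comm G (E * W * E^-1).
Proof.
move=> cW; split; last by apply: (conj_comm (f := evec k)) => //; [rewrite EE; exact: mon_M | exact: Eunit].
rewrite XEY invrM ?Eunit ?Yunit // !mulrA -(mulrA E Y W) (comm_Y cW) mulrA.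
by rewrite mulrK // Yunit.
Qed.

Lemma conjXE' W : comm G W ->
  X^-1 * W * X^-1^-1 = E^-1 * W * E^-1^-1 /\ comm G (E^-1 * W * E^-1^-1).
Proof.
move=> cW.
have c1 : comm G (E^-1 * W * E^-1^-1).
  by apply: (conj_comm mon_Einv) => //; rewrite unitrV Eunit.
split => //; rewrite !invrK XEY invrM ?Eunit ?Yunit //.
have cY := comm_Y c1; rewrite invrK in cY.
rewrite !mulrA.
have -> : Y^-1 * E^-1 * W * E * Y = Y^-1 * ((E^-1 * W * E) * Y) by rewrite !mulrA.
by rewrite -cY mulKr // Yunit.
Qed.

Lemma conjX (n : int) W : comm G W ->
  X ^ n * W * (X ^ n)^-1 = E ^ n * W * (E ^ n)^-1.
Proof.
move=> cW; case: n => m.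
  rewrite -!exprnP; apply: (conj_pow Xunit Eunit conjXE m cW).1.
rewrite NegzE -!invr_expz !invrK -!exprnP -!exprVn.
have := (conj_pow (U := X^-1) (V := E^-1) _ _ conjXE' m.+1 cW).1.
by rewrite !exprVn !invrK; apply; rewrite unitrV ?Xunit ?Eunit.
Qed.

Definition D (n : int) := E ^ (- n) * X ^ n.

Lemma D_comm n W : comm G W -> comm (D n) W.
Proof.
move=> cW; rewrite /comm /D.
rewrite -mulrA -{1}(mulrVK (unitrXz n Xunit) (X ^ n * W)) conjX //.
by rewrite -invr_expz !mulrA mulVr ?unitrXz ?Eunit // mul1r.
Qed.

Lemma D_unit n : D n \is a GRing.unit.
Proof. by rewrite /D unitrMl ?unitrXz ?Xunit ?Eunit. Qed.


Lemma inD_1 : inD 0 1.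
Proof. by rewrite -M0 -deg0; apply: mon_inD; apply: mon_M. Qed.

Lemma D_inD (m : nat) : inD 0 (D m).
Proof.
elim: m => [|m IH].
  by rewrite /D oppr0 !expr0z mulr1; exact: inD_1.
have -> : D m.+1 = E^-1 * D m * E * Y.
  rewrite /D exprSzr -[X in _ * (_ * X)]/X.
  have -> : X ^ m * X = X ^ m * (E * Y) by rewrite -XEY.
  by rewrite intS opprD exprzDr ?Eunit // -(invr_expz E 1) expr1z !mulrA.
have mE : mon (evec k) E by rewrite EE; exact: mon_M.
apply: (inD_eq _ (inD_mul (inD_mul (inD_mul (mon_inD mon_Einv) IH) (mon_inD mE)) Y_inD)).
by rewrite degN !addr0 addNr.
Qed.

Lemma D_inD' (n : int) : 0 <= n -> inD 0 (D n).
Proof. by case: n => // m _; exact: D_inD. Qed.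

Definition rho0 f := M f * E ^ (- deg f) * X ^ (deg f).

Lemma rho0_mul f h : rho0 f * rho0 h = z ^ bform L f h *: rho0 (f + h).
Proof.
rewrite /rho0 degD; set a := deg f; set b := deg h.
have mE : mon (evec k) E by rewrite EE; exact: mon_M.
have [f' [df' mf']] := mon_exprz mE Eunit (- b).
have cW : comm G (M h * E ^ (- b)).
  apply: (comm_G_mon0 (mon_mul (mon_M h) mf')).
  by rewrite degD df' degE mulr1 /b subrr.
have -> : M f * E ^ (- a) * X ^ a * (M h * E ^ (- b) * X ^ b) =
          M f * (D a * (M h * E ^ (- b))) * X ^ b by rewrite /D !mulrA.
rewrite (D_comm a cW) /D !mulrA Mmul -!scalerAl; congr (_ *: _).
rewrite -(mulrA _ (X ^ a)) -exprzDr ?Xunit //.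
rewrite -(mulrA _ (E ^ (- b))) -exprzDr ?Eunit //.
by rewrite [a + b]addrC opprD.
Qed.

Lemma rho0_0 : rho0 0 = 1.
Proof. by rewrite /rho0 deg0 oppr0 !expr0z M0 !mulr1. Qed.

Lemma rho0_ek : rho0 (evec k) = X.
Proof.
rewrite /rho0 degE expr1z -invr_expz expr1z -EE mulrV ?Eunit //.
by rewrite mul1r.
Qed.

Lemma rho0_deg0 h : deg h = 0 -> rho0 h = M h.
Proof. by move=> dh; rewrite /rho0 dh oppr0 !expr0z !mulr1. Qed.

Definition rhoT := lin rho0.

Lemma sumphi_rho0_mul s t :
  sumphi rho0 s * sumphi rho0 t = sumphi rho0 (prods s t).
Proof.
rewrite /sumphi big_distrl big_allpairs_dep /=; apply: eq_bigr => p _.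
rewrite big_distrr; apply: eq_bigr => q _ /=.
by rewrite sAB rho0_mul scalerA.
Qed.

Lemma rhoT_mul x y : inT x -> inT y -> rhoT (x * y) = rhoT x * rhoT y.
Proof.
move=> [s ->] [t ->]; rewrite /rhoT sumphi_mul !lin_val.
by rewrite sumphi_rho0_mul.
Qed.

Lemma rhoT_M f : rhoT (M f) = rho0 f.
Proof. exact: lin_M. Qed.

Lemma rhoT_1 : rhoT 1 = 1.
Proof. by rewrite -M0 rhoT_M rho0_0. Qed.

Lemma rhoT_add x y : inT x -> inT y -> rhoT (x + y) = rhoT x + rhoT y.
Proof. exact: lin_add. Qed.

Lemma rhoT_scale a x : inT x -> rhoT (a *: x) = a *: rhoT x.
Proof. exact: lin_scale. Qed.

Definition phid (d : int) f := if deg f == d then M f else 0.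

Lemma pi_inD d d' x : inD d' x -> lin (phid d) x = if d' == d then x else 0.
Proof.
move=> [s [-> hs]]; rewrite lin_val /sumphi.
case: eqP => [<-|ne].
  rewrite big_seq_cond [RHS]big_seq_cond; apply: eq_bigr => p /andP [ps _].
  by rewrite /phid (allP hs p ps).
rewrite big1_seq // => p /andP [_ ps].
rewrite /phid (eqP (allP hs p ps)); case: eqP => // _; exact: scaler0.
Qed.

Lemma rhoT_inj x : inT x -> rhoT x = 0 -> x = 0.
Proof.
move=> [s ->]; rewrite /rhoT lin_val => H0.
have [m hm] : exists m : int, all (fun p => m <= deg p.2) s.
  elim: (s) => [|p s' [m hm]]; first by exists 0.
  exists (Num.min m (deg p.2)); rewrite /= ge_min lexx orbT /=.
  by apply/allP => q qs; rewrite ge_min (allP hm q qs).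
pose y (p : K * 'rV[int]_N) := M p.2 * E ^ (- m) * D (deg p.2 - m).
have mE : mon (evec k) E by rewrite EE; exact: mon_M.
have hy : forall p, p \in s -> inD (deg p.2 - m) (y p).
  move=> p ps.
  have dpos : 0 <= deg p.2 - m by rewrite subr_ge0 (allP hm p ps).
  have [f' [df' mf']] := mon_exprz mE Eunit (- m).
  apply: (inD_eq _ (inD_mul (mon_inD (mon_mul (mon_M p.2) mf')) (D_inD' dpos))).
  by rewrite addr0 degD df' degE mulr1.
have Q : sumphi rho0 s * X ^ (- m) = \sum_(p <- s) p.1 *: y p.
  rewrite /sumphi big_distrl /=; apply: eq_bigr => p _; rewrite -scalerAl.
  congr (_ *: _); rewrite /rho0 /y /D.
  rewrite -(mulrA _ (X ^ deg p.2)) -exprzDr ?Xunit // !mulrA.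
  rewrite -(mulrA (M p.2) (E ^ (- m))) -exprzDr ?Eunit //.
  by rewrite opprB addKr.
have Hd : forall d, sumphi M (filter (fun p => deg p.2 - m == d) s) * (E ^ (- m) * D d) = 0.
  move=> d; have := congr1 (lin (phid d)) Q.
  rewrite H0 mul0r lin0 lin_sum; last first.
    by move=> p ps; apply: inT_scale; apply: (inD_T (hy p ps)).
  rewrite big_seq.
  have -> : \sum_(p <- s | p \in s) lin (phid d) (p.1 *: y p) =
     \sum_(p <- s | p \in s) (if deg p.2 - m == d then p.1 *: y p else 0).
    apply: eq_bigr => p ps; rewrite lin_scale; last exact: inD_T (hy p ps).
    by rewrite (pi_inD d (hy p ps)); case: ifP => // _; rewrite scaler0.
  rewrite -big_mkcondr -big_seq_cond => ->.
  rewrite /sumphi big_filter big_distrl /=; apply: eq_bigr.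
  by move=> p /eqP dp; rewrite /y dp -scalerAl !mulrA.
have Hf : forall d, sumphi M (filter (fun p => deg p.2 - m == d) s) = 0.
  move=> d; apply: (mulIr (_ : E ^ (- m) * D d \is a GRing.unit)).
    by rewrite unitrMl ?D_unit ?unitrXz ?Eunit.
  by rewrite mul0r Hd.
rewrite /sumphi (regroup s (fun p => deg p.2 - m)) big1 // => d _.
by have := Hf d; rewrite /sumphi big_filter.
Qed.


Lemma ifi_T a : in_frame_image z M a -> inT a.
Proof.
move=> [n [c [f ->]]]; exists [seq (Acoef z (c i), f i) | i <- enum 'I_n].
by rewrite /sumphi big_map big_enum.
Qed.

Lemma frac x : exists a b, [/\ inT a, inT b, b != 0 & x = a * b^-1].
Proof.
have [a [b [Ta Tb b0 ->]]] := Mfrac x.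
by exists a, b; split => //; apply: ifi_T.
Qed.

Lemma unitF (x : F) : x != 0 -> x \is a GRing.unit.
Proof. exact: Fdiv. Qed.

Lemma mulF_neq0 (x y : F) : x != 0 -> y != 0 -> x * y != 0.
Proof.
move=> x0 y0; apply/negP => /eqP xy0.
have : x * y \is a GRing.unit by rewrite unitrMl ?unitF.
by rewrite xy0 unitr0.
Qed.

Lemma hlp (x y w : F) : y \is a GRing.unit -> w \is a GRing.unit ->
  x * y * (w * y)^-1 = x * w^-1.
Proof. by move=> yu wu; rewrite invrM // mulrA mulrK. Qed.

Lemma rhoT_neq0 b : inT b -> b != 0 -> rhoT b != 0.
Proof. by move=> Tb; apply: contraNneq => /(rhoT_inj Tb) ->. Qed.

Lemma ore b d : inT b -> inT d -> b != 0 -> d != 0 ->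
  exists u v, [/\ inT u, inT v, u != 0, v != 0 & b * u = d * v].
Proof.
move=> Tb Td b0 d0.
have [x [y [Tx Ty y0 e]]] := frac (d^-1 * b).
have e' : b * y = d * x.
  by rewrite -[b](mulVKr (unitF d0)) e -!mulrA mulVr ?unitF // mulr1.
have x0 : x != 0.
  apply: contraNneq (mulF_neq0 b0 y0) => x0.
  by rewrite e' x0 mulr0.
by exists y, x; split.
Qed.

Lemma wdf a b c d : inT a -> inT b -> inT c -> inT d -> b != 0 -> d != 0 ->
  a * b^-1 = c * d^-1 -> rhoT a * (rhoT b)^-1 = rhoT c * (rhoT d)^-1.
Proof.
move=> Ta Tb Tc Td b0 d0 e.
have [u [v [Tu Tv u0 v0 buv]]] := ore Tb Td b0 d0.
have auv : a * u = c * v.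
  by rewrite -(mulKr (unitF b0) u) buv !mulrA e -(mulrA c) mulVr ?unitF // mulr1.
have r1 : rhoT b * rhoT u = rhoT d * rhoT v by rewrite -!rhoT_mul // buv.
have r2 : rhoT a * rhoT u = rhoT c * rhoT v by rewrite -!rhoT_mul // auv.
rewrite -(hlp (rhoT a) (unitF (rhoT_neq0 Tu u0)) (unitF (rhoT_neq0 Tb b0))).
rewrite -(hlp (rhoT c) (unitF (rhoT_neq0 Tv v0)) (unitF (rhoT_neq0 Td d0))).
by rewrite r1 r2.
Qed.

Definition rep2 x := epsilon (inhabits ((0 : F), (1 : F)))
  (fun ab => [/\ inT ab.1, inT ab.2, ab.2 != 0 & x = ab.1 * ab.2^-1]).

Lemma rep2_spec x : let ab := rep2 x in
  [/\ inT ab.1, inT ab.2, ab.2 != 0 & x = ab.1 * ab.2^-1].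
Proof.
rewrite /rep2; apply: (epsilon_spec (inhabits ((0 : F), (1 : F)))
  (fun ab => [/\ inT ab.1, inT ab.2, ab.2 != 0 & x = ab.1 * ab.2^-1])).
by have [a [b h]] := frac x; exists (a, b).
Qed.

Definition rho x := rhoT (rep2 x).1 * (rhoT (rep2 x).2)^-1.

Lemma rhoE a b : inT a -> inT b -> b != 0 -> rho (a * b^-1) = rhoT a * (rhoT b)^-1.
Proof.
move=> Ta Tb b0; have [T1 T2 n0 e] := rep2_spec (a * b^-1).
by rewrite /rho; apply: wdf.
Qed.

Lemma rho_T a : inT a -> rho a = rhoT a.
Proof.
move=> Ta; have := rhoE Ta inT_1 (oner_neq0 _).
by rewrite invr1 !mulr1 rhoT_1 invr1 mulr1.
Qed.

Lemma rho_add x y : rho (x + y) = rho x + rho y.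
Proof.
have [a [b [Ta Tb b0 ->]]] := frac x.
have [c [d [Tc Td d0 ->]]] := frac y.
have [u [v [Tu Tv u0 v0 buv]]] := ore Tb Td b0 d0.
have bu0 : b * u != 0 by apply: mulF_neq0.
have e1 : a * b^-1 = (a * u) * (b * u)^-1 by rewrite hlp ?unitF.
have e2 : c * d^-1 = (c * v) * (b * u)^-1 by rewrite buv hlp ?unitF.
have Tbu : inT (b * u) by apply: inT_mul.
have Tau : inT (a * u) by apply: inT_mul.
have Tcv : inT (c * v) by apply: inT_mul.
have Ts : inT (a * u + c * v) by apply: inT_add.
by rewrite e1 e2 -mulrDl !rhoE // rhoT_add // mulrDl.
Qed.

Lemma rho_mul x y : rho (x * y) = rho x * rho y.
Proof.
have [a [b [Ta Tb b0 ->]]] := frac x.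
have [c [d [Tc Td d0 ->]]] := frac y.
have [e [f [Te Tf f0 ef]]] := frac (b^-1 * c).
have cf : c * f = b * e.
  by rewrite -[c](mulVKr (unitF b0)) ef -!mulrA mulVr ?unitF // mulr1.
have -> : a * b^-1 * (c * d^-1) = (a * e) * (d * f)^-1.
  by rewrite invrM ?unitF // !mulrA -(mulrA a) ef !mulrA.
have Tae : inT (a * e) by apply: inT_mul.
have Tdf : inT (d * f) by apply: inT_mul.
have df0 : d * f != 0 by apply: mulF_neq0.
rewrite !rhoE // !rhoT_mul // invrM ?unitF ?rhoT_neq0 //.
have r : rhoT c * rhoT f = rhoT b * rhoT e by rewrite -!rhoT_mul // cf.
have r' : (rhoT b)^-1 * rhoT c = rhoT e * (rhoT f)^-1.
  rewrite -[rhoT c](mulrK (unitF (rhoT_neq0 Tf f0))) r.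
  by rewrite !mulrA mulVr ?unitF ?rhoT_neq0 // mul1r.
by rewrite !mulrA -(mulrA (rhoT a) (rhoT b)^-1) r' !mulrA.
Qed.

Lemma rho_1 : rho 1 = 1.
Proof. by rewrite (rho_T inT_1) rhoT_1. Qed.

Lemma rho_scale (c : K) x : rho (c *: x) = c *: rho x.
Proof.
have [a [b [Ta Tb b0 ->]]] := frac x.
have Tca : inT (c *: a) by apply: inT_scale.
by rewrite scalerAl !rhoE // rhoT_scale // scalerAl.
Qed.

Lemma rho_0 : rho 0 = 0.
Proof. by rewrite (rho_T inT_0) /rhoT lin0. Qed.

Lemma rho_inj : injective rho.
Proof.
have h0 : forall x, rho x = 0 -> x = 0.
  move=> x; have [a [b [Ta Tb b0 ->]]] := frac x.
  rewrite rhoE // => h.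
  have : rhoT a = 0.
    by rewrite -(mulrVK (unitF (rhoT_neq0 Tb b0)) (rhoT a)) h mul0r.
  by move/(rhoT_inj Ta) ->; rewrite mul0r.
have hN : forall x, rho (- x) = - rho x.
  by move=> x; apply/eqP; rewrite -subr_eq0 opprK -rho_add addNr rho_0.
move=> x y e; apply/eqP; rewrite -subr_eq0; apply/eqP; apply: h0.
by rewrite rho_add hN e subrr.
Qed.

Lemma rho_M f : rho (M f) = rho0 f.
Proof. by rewrite (rho_T (inT_M f)) rhoT_M. Qed.


Definition ahom (phi : F -> F) := [/\ {morph phi : x y / x + y},
  {morph phi : x y / x * y}, phi 1 = 1,
  (forall (a : K) x, phi (a *: x) = a *: phi x) & injective phi].

Lemma unit_neq0 (x : F) : x \is a GRing.unit -> x != 0.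
Proof. by apply: contraTneq => ->; rewrite unitr0. Qed.

Section Ahom.
Variable phi : F -> F.
Hypothesis hphi : ahom phi.

Lemma ahom0 : phi 0 = 0.
Proof.
have [hadd _ _ _ _] := hphi.
have h := hadd 0 0; rewrite addr0 in h.
by apply: (addrI (phi 0)); rewrite -h addr0.
Qed.

Lemma ahom_neq0 x : x != 0 -> phi x != 0.
Proof.
have [_ _ _ _ hinj] := hphi.
by apply: contraNneq => h; apply/eqP; apply: hinj; rewrite h ahom0.
Qed.

Lemma ahomV x : x != 0 -> phi x^-1 = (phi x)^-1.
Proof.
move=> x0; have [_ hmul h1 _ _] := hphi.
have u := unitF (ahom_neq0 x0).
have e : phi x * phi x^-1 = 1 by rewrite -hmul mulrV ?unitF.
by rewrite -[phi x^-1](mulKr u) e mulr1.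
Qed.

Lemma ahomX (u : F) (m : nat) : phi (u ^+ m) = phi u ^+ m.
Proof.
have [_ hmul h1 _ _] := hphi.
by elim: m => [|m IH]; rewrite ?expr0 // !exprS hmul IH.
Qed.

Lemma ahomXz (u : F) (n : int) : u != 0 -> phi (u ^ n) = phi u ^ n.
Proof.
move=> u0; case: n => m; first by rewrite -!exprnP ahomX.
rewrite NegzE -!invr_expz -!exprnP ahomV ?ahomX //.
by apply: unit_neq0; apply: unitrX; apply: unitF.
Qed.

Lemma ahom_sum (I : Type) (r : seq I) (G : I -> F) :
  phi (\sum_(i <- r) G i) = \sum_(i <- r) phi (G i).
Proof.
have [hadd _ _ _ _] := hphi.
elim: r => [|i r IH]; first by rewrite !big_nil ahom0.
by rewrite !big_cons hadd IH.
Qed.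

End Ahom.

Lemma ahom_rho : ahom rho.
Proof.
split; [exact: rho_add | exact: rho_mul | exact: rho_1 | exact: rho_scale |].
exact: rho_inj.
Qed.

Lemma rhoY : rho Y = Y.
Proof.
have [c Vc] := V_mon.
have -> : Y = 1 + c *: M g by rewrite YE XE mulrDr -EE mulVr ?Eunit // Vc.
by rewrite rho_add rho_1 rho_scale rho_M rho0_deg0 // /deg hgk.
Qed.

Lemma rhoEX : rho E = X.
Proof. by rewrite EE rho_M rho0_ek. Qed.

Lemma surjM f : exists w, rho w = M f.
Proof.
set a := deg f.
have EY : E * Y^-1 != 0.
  by apply: unit_neq0; rewrite unitrMl ?unitrV ?Yunit ?Eunit.
exists (M f * E ^ (- a) * (E * Y^-1) ^ a).
have E0 : E != 0 by apply: unit_neq0; exact: Eunit.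
rewrite !rho_mul (ahomXz ahom_rho _ E0) (ahomXz ahom_rho _ EY) rho_mul.
rewrite (ahomV ahom_rho) ?rhoY ?rhoEX ?rho_M; last by apply: unit_neq0; exact: Yunit.
have -> : X * Y^-1 = E by rewrite XEY mulrK ?Yunit.
rewrite /rho0 -/a -(mulrA _ (X ^ a)) -exprzDr ?Xunit // subrr expr0z mulr1.
by rewrite -mulrA -exprzDr ?Eunit // addNr expr0z mulr1.
Qed.

Lemma rho_surj y : exists x, rho x = y.
Proof.
have [a [b [[s ->] [t ->] b0 ->]]] := frac y.
have hs : forall s, exists w, rho w = sumphi M s.
  elim=> [|p s' [w hw]]; first by exists 0; rewrite rho_0 /sumphi big_nil.
  have [w' hw'] := surjM p.2.
  by exists (p.1 *: w' + w); rewrite rho_add rho_scale hw' hw /sumphi big_cons.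
have [a' ha] := hs s; have [b' hb] := hs t.
have b'0 : b' != 0 by apply: contraNneq b0 => e; rewrite -hb e rho_0.
by exists (a' * b'^-1); rewrite rho_mul (ahomV ahom_rho) // ha hb.
Qed.

Lemma rho_bij : bijective rho.
Proof.
pose h y := epsilon (inhabits (0 : F)) (fun x => rho x = y).
have hh : cancel h rho.
  move=> y; rewrite /h; apply: (epsilon_spec (inhabits (0 : F)) (fun x => rho x = y)).
  exact: rho_surj.
exists h; last exact: hh.
by move=> x; apply: rho_inj; rewrite hh.
Qed.

Lemma uniq_hom phi1 phi2 : ahom phi1 -> ahom phi2 ->
  (forall j, phi1 (M (evec j)) = phi2 (M (evec j))) -> phi1 =1 phi2.
Proof.
move=> h1 h2 hj.
have [a1 m1 o1 s1 _] := h1; have [a2 m2 o2 s2 _] := h2.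
pose P h := phi1 (M h) = phi2 (M h).
have stepP : forall h j, P h -> P (h + evec j).
  move=> h j e.
  have eq : M (h + evec j) = (z ^ bform L h (evec j))^-1 *: (M h * M (evec j)).
    by rewrite Mmul scalerA mulVf ?scale1r // -unitfE zunit.
  by rewrite /P eq s1 s2 m1 m2 e hj.
have stepN : forall h j, P h -> P (h - evec j).
  move=> h j e.
  have eq : M (h - evec j) = (z ^ bform L (h - evec j) (evec j) *: M h) * (M (evec j))^-1.
    by have := Mmul (h - evec j) (evec j); rewrite subrK => <-; rewrite mulrK ?Munit.
  rewrite /P eq m1 m2 (ahomV h1) ?M_neq0 // (ahomV h2) ?M_neq0 //.
  by rewrite s1 s2 e hj.
have stepZ : forall j (c : int) h, P h -> P (h + c *: evec j).
  move=> j c h Ph; case: c => n.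
    elim: n => [|m IH]; first by rewrite scale0r addr0.
    have -> : h + (m.+1)%:Z *: evec j = (h + m%:Z *: evec j) + evec j.
      by rewrite intS scalerDl scale1r [evec j + _]addrC addrA.
    exact: stepP.
  have hneg : forall m, P (h - (m.+1)%:Z *: evec j).
    elim=> [|m IH]; first by rewrite scale1r; apply: stepN.
    have -> : h - (m.+2)%:Z *: evec j = (h - (m.+1)%:Z *: evec j) - evec j.
      by rewrite [(m.+2)%:Z]intS scalerDl scale1r opprD addrA addrAC.
    exact: stepN.
  by rewrite NegzE scaleNr; apply: hneg.
have PM : forall f, P f.
  move=> f; rewrite (row_sum_delta f).
  elim: (index_enum _) => [|j r IH].
    by rewrite big_nil /P M0 o1 o2.
  by rewrite big_cons addrC; apply: stepZ.
move=> x; have [a [b [[s ->] [t ->] b0 ->]]] := frac x.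
rewrite m1 m2 (ahomV h1 b0) (ahomV h2 b0) /sumphi !(ahom_sum h1) !(ahom_sum h2).
have e : forall r : seq (K * 'rV[int]_N),
    \sum_(p <- r) phi1 (p.1 *: M p.2) = \sum_(p <- r) phi2 (p.1 *: M p.2).
  by move=> r; apply: eq_bigr => p _; rewrite s1 s2 PM.
by rewrite !e.
Qed.

Lemma main_exists : exists rho : F -> F,
    [/\ alg_auto rho,
        rho (M (evec k)) = M (evec k) + M (evec k + g),
        (forall j : 'I_N, j != k -> rho (M (evec j)) = M (evec j)) &
        forall rho' : F -> F, alg_auto rho' ->
          rho' (M (evec k)) = M (evec k) + M (evec k + g) ->
          (forall j : 'I_N, j != k -> rho' (M (evec j)) = M (evec j)) ->
          rho' =1 rho].
Proof.
have rhoj : forall j, j != k -> rho (M (evec j)) = M (evec j).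
  by move=> j jk; rewrite rho_M rho0_deg0 // deg_e (negbTE jk).
have rhok : rho (M (evec k)) = M (evec k) + M (evec k + g).
  by rewrite rho_M rho0_ek XE.
exists rho; split => //.
  split; [exact: rho_add | exact: rho_mul | exact: rho_1 | exact: rho_scale |].
  exact: rho_bij.
move=> rho' [a' m' o' s' b'] hk hj.
apply: uniq_hom => //.
  by split => //; exact: bij_inj.
  exact: ahom_rho.
move=> j; case: (eqVneq j k) => [->|jk]; first by rewrite hk rhok.
by rewrite hj // rhoj.
Qed.

End Main.

Theorem proposition3p5 (K : fieldType) (F : unitAlgType K) (ell N : nat) (z : K)
    (M : 'rV[int]_N -> F) (L : 'M[int]_N) (k : 'I_N) (g : 'rV[int]_N) :
  is_Qzeta ell z -> division_ring F ->
  toric_frame_with ell z M L ->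
  (forall j : 'I_N, j != k -> (ell%:Z %| bform L g (evec j))%Z) ->
  g 0 k = 0 ->
  forall s : bool,
  exists rho : F -> F,
    [/\ alg_auto rho,
        rho (M (evec k)) = M (evec k) + M (evec k + (if s then g else - g)),
        (forall j : 'I_N, j != k -> rho (M (evec j)) = M (evec j)) &
        forall rho' : F -> F, alg_auto rho' ->
          rho' (M (evec k)) = M (evec k) + M (evec k + (if s then g else - g)) ->
          (forall j : 'I_N, j != k -> rho' (M (evec j)) = M (evec j)) ->
          rho' =1 rho].
Proof.
move=> [ell0 zp Kc Kg] Fd [Ls M0 Mm Mi Mf] hg hgk s.
have hg' : forall j : 'I_N, j != k ->
    (ell%:Z %| bform L (if s then g else - g) (evec j))%Z.
  move=> j jk; case: (s); first exact: hg.
  have -> : bform L (- g) (evec j) = - bform L g (evec j).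
    by rewrite /bform !mulNmx mxE.
  by rewrite rpredN; apply: hg.
have hgk' : (if s then g else - g) 0 k = 0.
  by case: (s) => //; rewrite mxE hgk oppr0.
exact: (main_exists ell0 zp Kc Kg Fd Ls M0 Mm Mi Mf hg' hgk').
Qed.
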